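(* Consider $x[t+1]=Ax[t]$, $y_i[t]=C_ix[t]+e_i[t]$, $i=1,\dots,p$, with $A\in\mathbb{R}^{n\times n}$, $C_i\in\mathbb{R}^{1\times n}$, $C\in\mathbb{R}^{p\times n}$ the matrix with rows $C_i$, where the attack $e[t]=(e_1[t],\dots,e_p[t])^T$ is arbitrary on a fixed set of at most $s$ indices and zero elsewhere for all $t$. For each $i$ let $Y_i[t]=(y_i[t],y_i[t+1],\dots,y_i[t+n-1])^T\in\mathbb{R}^n$ and $Y[t]=(Y_1[t]^T,\dots,Y_p[t]^T)^T\in\mathbb{R}^{pn}$. Let $D\in\mathbb{R}^{v\times p}$. Suppose there exists an estimator whose output sequence $(\hat x[t])_{t\in\mathbb{N}}$ is determined solely by the sequence $\big((D\otimes I_n)Y[t]\big)_{t\in\mathbb{N}}$ and which satisfies $\lim_{t\to\infty}\|x[t]-\hat x[t]\|=0$ for every initial condition $x[0]\in\mathbb{R}^n$ and every such attack signal. Then $(A,C)$ is $2s$-sparse detectable with respect to $D$.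
   Context: A pair $(A,M)$ is detectable if every eigenvalue of $A$ of modulus $\ge1$ is observable, i.e. $Mw\ne0$ for every (complex) eigenvector $w$ of $A$ whose eigenvalue has modulus $\ge 1$. Let $\mathbf{E}_p$ be the standard basis of $\mathbb{R}^p$. For $D\in\mathbb{R}^{v\times p}$ and $k\in\mathbb{N}$, let $\mathbf{P}_k(D)$ be the set of all real matrices $L$ with $v$ columns (any number of rows) such that $\ker(L)=D(\mathrm{span}\,V)$ for some $V\subseteq\mathbf{E}_p$ with $|V|\le k$. $(A,C)$ is $k$-sparse detectable with respect to $D$ if $(A,LDC)$ is detectable for every $L\in\mathbf{P}_k(D)$. $\otimes$ is the Kronecker product. *)

(* Defs.v *)
From HB Require Import structures.
From mathcomp Require Import all_boot all_order all_algebra.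
From mathcomp Require Import all_classical all_reals all_analysis.
From mathcomp Require Import complex mxtens.

Set Implicit Arguments. Unset Strict Implicit. Unset Printing Implicit Defensive.
Import Order.TTheory GRing.Theory Num.Theory.
Import numFieldNormedType.Exports.
Local Open Scope ring_scope.
Local Open Scope complex_scope.

Definition cmx (R : rcfType) (m n : nat) (M : 'M[R]_(m, n)) : 'M[R[i]]_(m, n) :=
  map_mx (fun x : R => x%:C) M.

(* (A, M) detectable: every eigenvalue of modulus >= 1 is observable,
   i.e. M w <> 0 for every complex eigenvector w of A with |lambda| >= 1. *)
Definition detectable (R : rcfType) (n q : nat) (A : 'M[R]_n) (M : 'M[R]_(q, n)) : Prop :=
  forall (lam : R[i]) (w : 'cV[R[i]]_n),
    w != 0 -> cmx A *m w = lam *: w -> 1 <= `|lam| -> cmx M *m w != 0.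

(* L \in P_k(D): ker L = D (span V) for some V subset of the standard basis
   of R^p with |V| <= k; V is encoded by its index set S : {set 'I_p}, and
   span V = vectors supported on S. *)
Definition in_Pk (R : rcfType) (v p k r : nat) (D : 'M[R]_(v, p)) (L : 'M[R]_(r, v)) : Prop :=
  exists S : {set 'I_p}, (#|S| <= k)%N /\
    forall w : 'cV[R]_v,
      L *m w = 0 <->
      exists c : 'cV[R]_p, (forall j, j \notin S -> c j 0 = 0) /\ w = D *m c.

Definition sparse_detectable (R : rcfType) (n p v k : nat)
  (A : 'M[R]_n) (C : 'M[R]_(p, n)) (D : 'M[R]_(v, p)) : Prop :=
  forall (r : nat) (L : 'M[R]_(r, v)), in_Pk k D L -> detectable A (L *m D *m C).

Definition state (R : pzRingType) (n : nat) (A : 'M[R]_n) (x0 : 'cV[R]_n) (t : nat) : 'cV[R]_n :=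
  A ^+ t *m x0.

Definition output (R : pzRingType) (n p : nat) (A : 'M[R]_n) (C : 'M[R]_(p, n))
  (x0 : 'cV[R]_n) (e : nat -> 'cV[R]_p) (t : nat) : 'cV[R]_p :=
  C *m state A x0 t + e t.

(* Y[t] = (Y_1[t]; ...; Y_p[t]) with Y_i[t] = (y_i[t], ..., y_i[t+n-1]);
   the entry of index i*n + j is y_i[t+j]. *)
Definition stackY (R : pzRingType) (n p : nat) (y : nat -> 'cV[R]_p) (t : nat) : 'cV[R]_(p * n) :=
  \col_k y (t + (mxtens_unindex k).2)%N (mxtens_unindex k).1 0.

Definition attack (R : pzRingType) (p s : nat) (e : nat -> 'cV[R]_p) : Prop :=
  exists S : {set 'I_p}, (#|S| <= s)%N /\ forall t i, i \notin S -> e t i 0 = 0.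

(* Main.v *)
Require Import Defs.
From HB Require Import structures.
From mathcomp Require Import all_boot all_order all_algebra.
From mathcomp Require Import all_classical all_reals all_analysis.
From mathcomp Require Import complex mxtens.
From mathcomp Require Import zify ring lra.
Import Order.TTheory GRing.Theory Num.Theory.
Import numFieldNormedType.Exports.
Local Open Scope classical_set_scope.
Local Open Scope ring_scope.
Lemma entry_le (R : realType) (m n : nat) (x : 'M[R]_(m,n)) i j : `|x i j| <= `|x|.
Proof.
have -> : `|x| = mx_norm x by [].
rewrite mx_normrE; exact: (le_bigmax _ _ (i,j)).
Qed.

Lemma split_set (T : finType) (s : nat) (S : {set T}) : (#|S| <= 2 * s)%N ->
  exists S1 : {set T}, (#|S1| <= s)%N /\ (#|S :\: S1| <= s)%N.
Proof.
elim: s S => [|s IH] S HS.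
  exists (finset.set0 : {set T}); rewrite cards0 finset.setD0; split=> //.
have [->|[x xS]] := set_0Vmem S.
  by exists (finset.set0 : {set T}); rewrite cards0 finset.set0D cards0.
have [HS'|[y yS']] := set_0Vmem (S :\ x).
  exists S; rewrite finset.setDv cards0; split=> //.
  have := cardsD1 x S; rewrite xS HS' cards0 => ->; by [].
have HS'' : (#|S :\ x :\ y| <= 2 * s)%N.
  move: HS; rewrite (cardsD1 x S) xS (cardsD1 y (S :\ x)) yS'; lia.
have [S1 [H1 H2]] := IH _ HS''.
exists (x |: S1); split.
  rewrite cardsU1; case: (x \in S1) => /=; lia.
apply: (@leq_trans #|y |: ((S :\ x :\ y) :\: S1)|).
  apply: subset_leq_card; apply/fintype.subsetP=> z.
  rewrite !inE; case: (z == y) => //=; case: (z == x) => //=.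
rewrite cardsU1; case: (y \in _) => /=; lia.
Qed.
Lemma stack_entry (R : realType) (n p v : nat) (D : 'M[R]_(v, p))
  (y : nat -> 'cV[R]_p) t (i1 : 'I_v) (i2 : 'I_n) :
  ((D *t (1%:M : 'M[R]_n)) *m stackY n y t) (mxtens_index (i1, i2)) 0
  = (D *m y (t + i2)%N) i1 0.
Proof.
rewrite !mxE.
rewrite (reindex (@mxtens_index p n)); last first.
  by exists (@mxtens_unindex p n) => k _; rewrite (mxtens_indexK, mxtens_unindexK).
pose G := fun k : 'I_(p * n) => (D *t (1%:M : 'M[R]_n)) (mxtens_index (i1, i2)) k *
      stackY n y t k 0.
transitivity (\sum_(a < p) \sum_(b < n) G (mxtens_index (a, b))).
  by rewrite pair_big /=; apply: eq_bigr => -[a b] _.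
apply: eq_bigr => a _; rewrite /G.
rewrite (bigD1 i2) //= big1 ?addr0; last first.
  by move=> b /negbTE hb; rewrite tensmxE mxE eq_sym hb mulr0 mul0r.
by rewrite tensmxE !mxE mxtens_indexK eqxx mulr1.
Qed.

Lemma stack_eq (R : realType) (n p v : nat) (D : 'M[R]_(v, p))
  (y1 y2 : nat -> 'cV[R]_p) :
  (forall u, D *m y1 u = D *m y2 u) ->
  (fun t => (D *t (1%:M : 'M[R]_n)) *m stackY n y1 t) =
  (fun t => (D *t (1%:M : 'M[R]_n)) *m stackY n y2 t).
Proof.
move=> H; apply: funext => t; apply/matrixP => k j.
rewrite (ord1 j); case: (mxtens_indexP k) => i1 i2.
by rewrite !stack_entry H.
Qed.
Local Open Scope complex_scope.
Lemma Re_add (R : realType) (x y : R[i]) : complex.Re (x + y) = complex.Re x + complex.Re y.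
Proof. by case: x; case: y. Qed.
Lemma Im_add (R : realType) (x y : R[i]) : complex.Im (x + y) = complex.Im x + complex.Im y.
Proof. by case: x; case: y. Qed.
Lemma Re_mulC (R : realType) (r : R) (z : R[i]) : complex.Re (r%:C * z) = r * complex.Re z.
Proof. by case: z => a b /=; rewrite mul0r subr0. Qed.
Lemma Im_mulC (R : realType) (r : R) (z : R[i]) : complex.Im (r%:C * z) = r * complex.Im z.
Proof. by case: z => a b /=; rewrite mul0r addr0. Qed.

Lemma ReM (R : realType) (m k : nat) (M : 'M[R]_(m, k)) (w : 'cV[R[i]]_k) :
  map_mx (@complex.Re R) (cmx M *m w) = M *m map_mx (@complex.Re R) w.
Proof.
apply/matrixP => a b; rewrite !mxE.
rewrite (big_morph (@complex.Re R) (@Re_add R) (erefl : complex.Re (0 : R[i]) = 0)).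
by apply: eq_bigr => j _; rewrite !mxE Re_mulC.
Qed.

Lemma ImM (R : realType) (m k : nat) (M : 'M[R]_(m, k)) (w : 'cV[R[i]]_k) :
  map_mx (@complex.Im R) (cmx M *m w) = M *m map_mx (@complex.Im R) w.
Proof.
apply/matrixP => a b; rewrite !mxE.
rewrite (big_morph (@complex.Im R) (@Im_add R) (erefl : complex.Im (0 : R[i]) = 0)).
by apply: eq_bigr => j _; rewrite !mxE Im_mulC.
Qed.

Lemma cmxM (R : realType) (m k l : nat) (M : 'M[R]_(m, k)) (N : 'M[R]_(k, l)) :
  cmx (M *m N) = cmx M *m cmx N.
Proof. exact: map_mxM. Qed.

Lemma eig_pow (R : realType) (n : nat) (A : 'M[R]_n) (lam : R[i]) (w : 'cV[R[i]]_n) :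
  cmx A *m w = lam *: w -> forall t, cmx (A ^+ t) *m w = lam ^+ t *: w.
Proof.
move=> H; elim=> [|t IH].
  by rewrite expr0 scale1r /cmx map_mx1 mul1mx.
by rewrite exprS -mulmxE cmxM -mulmxA IH -scalemxAr H scalerA -exprSr.
Qed.
Lemma key (R : realType) (n p v s r : nat) (A : 'M[R]_n) (C : 'M[R]_(p, n))
  (D : 'M[R]_(v, p)) (L : 'M[R]_(r, v))
  (est : (nat -> 'cV[R]_(v * n)) -> nat -> 'cV[R]_n) :
  (forall (x0 : 'cV[R]_n) (e : nat -> 'cV[R]_p),
       attack s e ->
       (fun t => `| state A x0 t
                    - est (fun t' => (D *t (1%:M : 'M[R]_n)) *m stackY n (output A C x0 e) t') t |)
         @ \oo --> (0 : R)) ->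
  in_Pk (2 * s) D L ->
  forall x0 : 'cV[R]_n, (forall t, L *m (D *m (C *m (A ^+ t *m x0))) = 0) ->
  forall k (eps : R), 0 < eps -> \forall t \near \oo, `|(A ^+ t *m x0) k 0| < eps.
Proof.
move=> Hest [S [HS HL]] x0 Hx k eps eps0.
have : forall t, exists c : 'cV[R]_p,
    (forall j, j \notin S -> c j 0 = 0) /\ D *m (C *m (A ^+ t *m x0)) = D *m c.
  by move=> t; apply/HL.
case/choice => c Hc.
have [S1 [H1 H2]] := @split_set _ s S HS.
pose c1 t : 'cV[R]_p := \col_j (if j \in S1 then c t j 0 else 0).
pose c2 t : 'cV[R]_p := \col_j (if j \in S1 then 0 else c t j 0).
have Hc12 t : c t = c1 t + c2 t.
  apply/matrixP => j b; rewrite (ord1 b) !mxE.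
  by case: (j \in S1); rewrite ?addr0 ?add0r.
pose e1 t := - c1 t.
pose e2 := c2.
have A1 : attack s e1.
  by exists S1; split => // t j hj; rewrite /e1 !mxE (negbTE hj) oppr0.
have A2 : attack s e2.
  exists (S :\: S1); split => // t j.
  rewrite !inE negb_and negbK => /orP[hj|hj]; rewrite /e2 mxE.
    by rewrite hj.
  by case: ifP => // _; exact: (Hc t).1.
have Heq : forall u, D *m output A C x0 e1 u = D *m output A C 0 e2 u.
  move=> u; rewrite /output /state mulmx0 mulmx0 add0r mulmxDr (Hc u).2 /e1 /e2 mulmxN.
  by rewrite Hc12 mulmxDr addrAC subrr add0r.
have HF := @stack_eq R n p v D _ _ Heq.
have h1 := Hest x0 e1 A1.
have h2 := Hest 0 e2 A2.
rewrite HF in h1.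
move: h1 h2; move: (est _) => E h1 h2.
have eps2 : 0 < eps / 2 by rewrite divr_gt0.
have g1 := @cvgr0_norm_lt _ _ _ _ eventually_filter _ h1 _ eps2.
have g2 := @cvgr0_norm_lt _ _ _ _ eventually_filter _ h2 _ eps2.
apply: (filterS2 _ _ g1 g2) => t a1 a2.
rewrite normr_id in a1; rewrite normr_id in a2.
apply: le_lt_trans (@entry_le _ _ _ _ k 0) _.
have -> : A ^+ t *m x0 = (state A x0 t - E t) - (state A 0 t - E t).
  by rewrite /state mulmx0 sub0r opprK subrK.
apply: le_lt_trans (ler_normB _ _) _.
by rewrite [eps]splitr ltrD.
Qed.
Arguments eig_pow {R n A lam w}.
Lemma arith (R : realType) (q eps x y : R) : 0 < eps -> eps <= 1 -> eps <= q / 2 ->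
  `|x| < eps -> `|y| < eps -> q <= x ^+ 2 + y ^+ 2 -> False.
Proof.
move=> e0 e1 e2; rewrite !ltr_norml => /andP[? ?] /andP[? ?] ?.
nra.
Qed.
Arguments key {R n p v s r A C D L est}.

Theorem lemma2 (R : realType) (n p v s : nat)
  (A : 'M[R]_n) (C : 'M[R]_(p, n)) (D : 'M[R]_(v, p)) :
  (exists est : (nat -> 'cV[R]_(v * n)) -> nat -> 'cV[R]_n,
     forall (x0 : 'cV[R]_n) (e : nat -> 'cV[R]_p),
       attack s e ->
       (fun t => `| state A x0 t
                    - est (fun t' => (D *t (1%:M : 'M[R]_n)) *m stackY n (output A C x0 e) t') t |)
         @ \oo --> (0 : R)) ->
  sparse_detectable (2 * s) A C D.
Proof.
move=> [est Hest] r L HL lam w w0 Heig Hlam.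
apply/negP => /eqP H0.
pose a := map_mx (@complex.Re R) w.
pose b := map_mx (@complex.Im R) w.
have Za : forall t, L *m (D *m (C *m (A ^+ t *m a))) = 0.
  move=> t; rewrite !mulmxA /a -ReM cmxM -mulmxA (eig_pow Heig) -scalemxAr H0 scaler0.
  by apply/matrixP => i j; rewrite !mxE.
have Zb : forall t, L *m (D *m (C *m (A ^+ t *m b))) = 0.
  move=> t; rewrite !mulmxA /b -ImM cmxM -mulmxA (eig_pow Heig) -scalemxAr H0 scaler0.
  by apply/matrixP => i j; rewrite !mxE.
case: (pickP (fun k => w k 0 != 0)) => [k wk|H]; last first.
  move/eqP: w0; apply; apply/matrixP => i j; rewrite (ord1 j) !mxE.
  by move: (H i) => /negbFE/eqP.
have Hre t : (A ^+ t *m a) k 0 = complex.Re (lam ^+ t * w k 0).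
  by rewrite /a -ReM (eig_pow Heig) !mxE.
have Him t : (A ^+ t *m b) k 0 = complex.Im (lam ^+ t * w k 0).
  by rewrite /b -ImM (eig_pow Heig) !mxE.
pose q := complex.Re (w k 0) ^+ 2 + complex.Im (w k 0) ^+ 2.
have q0 : 0 < q.
  rewrite lt_def addr_ge0 ?sqr_ge0 // andbT.
  apply/negP => /eqP q0; move/negP: wk; apply.
  have : `|w k 0| ^+ 2 = 0 by rewrite -add_Re2_Im2 -/q q0.
  by move/eqP; rewrite expf_eq0 /= normr_eq0.
have Hb t : q <= complex.Re (lam ^+ t * w k 0) ^+ 2 + complex.Im (lam ^+ t * w k 0) ^+ 2.
  rewrite -lecR !add_Re2_Im2 normrM exprMn.
  apply: ler_peMl; first by rewrite exprn_ge0.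
  by rewrite normrX -exprM exprn_ege1.
pose eps := Num.min 1 (q / 2).
have eps0 : 0 < eps by rewrite /eps lt_min ltr01 divr_gt0.
have e1 : eps <= 1 by rewrite /eps ge_min lexx.
have e2 : eps <= q / 2 by rewrite /eps ge_min lexx orbT.
have G : \forall t \near \oo, False.
  have ar := @arith R q eps.
  apply: (filterS2 _ _ (key Hest HL a Za k eps eps0) (key Hest HL b Zb k eps eps0)) => t u1 u2.
  rewrite Hre in u1; rewrite Him in u2; have Hq := Hb t.
  move: u1 u2 Hq.
  set x := complex.Re _; set y := complex.Im _.
  move=> u1 u2 Hq; exact: (ar _ _ eps0 e1 e2 u1 u2 Hq).
have [t //] := @filter_ex _ _ eventually_filter _ G.
Qed.
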